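(* Let $m\ge 2$, $\gamma>0$ and $u>0$, and let $h\in\{N,S\}$. Let $\kappa\in\mathbb C$ with $k=|\kappa|>0$. Then there is $E_0=E_0(\gamma,u,k)>0$ such that the matrix $\hat H^h(\kappa)$ has no eigenvalue in the interval $(-E_0,E_0)$. Moreover, all eigenvalues of $\hat H^h(\kappa)$ are simple.
   Context: Let $\sigma_1,\sigma_2$ be the standard Pauli matrices and $A=\begin{pmatrix}0&0\\1&0\end{pmatrix}$. For a real number $v$ and $\kappa=k_x+ik_y\in\mathbb C$, let $\hat H(\kappa;v)$ be the $2m\times 2m$ Hermitian matrix written in $m\times m$ blocks of size $2\times2$ whose $j$-th diagonal block is $u_jI_2+\begin{pmatrix}0&\bar\kappa\\ \kappa&0\end{pmatrix}$ with $u_j=\frac{v}{m-1}\big(j-\frac{m+1}{2}\big)$, whose $(j,j+1)$ block is $\gamma A$ and whose $(j+1,j)$ block is $\gamma A^*$ for $1\le j\le m-1$, all other blocks being zero. Define $\hat H^N(\kappa)=\hat H(\kappa;u)$ and $\hat H^S(\kappa)=\hat H(\kappa;-u)$. *)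

(* Defs.v *)
From HB Require Import structures.
From mathcomp Require Import all_boot all_order all_algebra.
From mathcomp Require Import complex.
Set Implicit Arguments. Unset Strict Implicit. Unset Printing Implicit Defensive.
Import Order.TTheory GRing.Theory Num.Theory.
Local Open Scope ring_scope.
Local Open Scope complex_scope.

(* Rows/columns of the 2m x 2m matrix are indexed by
   p : 'I_(2*m); p corresponds to block j = p %/ 2 (0-based, i.e. the paper's
   block index j+1) and position a = p %% 2 inside the 2x2 block. *)

Definition uj (R : rcfType) (m : nat) (v : R) (j : nat) : R :=
  v / (m%:R - 1) * ((j.+1)%:R - (m%:R + 1) / 2).

Definition Hentry (R : rcfType) (m : nat) (gamma v : R) (kappa : R[i])
  (j a l b : nat) : R[i] :=
  if j == l then
    (if a == b then (uj m v j)%:C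
     else if (a == 0%N) && (b == 1%N) then kappa^*%R
     else kappa)
  else if l == j.+1 then
    (* gamma * A, A = [[0,0],[1,0]] *)
    (if (a == 1%N) && (b == 0%N) then gamma%:C else 0)
  else if j == l.+1 then
    (* gamma * A^*, A^* = [[0,1],[0,0]] *)
    (if (a == 0%N) && (b == 1%N) then gamma%:C else 0)
  else 0.

Definition Hhat (R : rcfType) (m : nat) (gamma v : R) (kappa : R[i])
  : 'M[R[i]]_(2 * m) :=
  \matrix_(p, q) Hentry m gamma v kappa (p %/ 2) (p %% 2) (q %/ 2) (q %% 2).

Inductive NS := hN | hS.

Definition HN (R : rcfType) m (gamma u : R) kappa := Hhat m gamma u kappa.
Definition HS (R : rcfType) m (gamma u : R) kappa := Hhat m gamma (- u) kappa.

Definition Hh (R : rcfType) (h : NS) m (gamma u : R) kappa :=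
  match h with hN => HN m gamma u kappa | hS => HS m gamma u kappa end.

Definition simple_eigenvalue (F : fieldType) n (A : 'M[F]_n) (x : F) :=
  mup x (char_poly A) = 1%N.

(* Main.v *)
Require Import Defs.
From HB Require Import structures.
From mathcomp Require Import all_boot all_order all_algebra.
From mathcomp Require Import complex zify ring.
Import Order.TTheory GRing.Theory Num.Theory.
Local Open Scope ring_scope.
Local Open Scope complex_scope.

Lemma char_poly_XAY (F : fieldType) n (A X Y : 'M[F]_n) :
  X *m Y = 1%:M -> char_poly (X *m A *m Y) = char_poly A.
Proof.
move=> XY.
have eX : ('X%:M : 'M[{poly F}]_n) = map_mx polyC X *m 'X%:M *m map_mx polyC Y.
  rewrite mul_mx_scalar -scalemxAl -map_mxM XY.
  rewrite map_mx1. by rewrite scalemx1.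
rewrite /char_poly /char_poly_mx {1}eX !map_mxM.
rewrite -mulmxBl -mulmxBr !det_mulmx mulrC mulrA -det_mulmx -map_mxM.
by rewrite (mulmx1C XY) map_mx1 det1 mul1r.
Qed.

Lemma herm_simple (C : numClosedFieldType) n (A : 'M[C]_n) :
  A \is hermsymmx ->
  (forall lam, (n.-1 <= \rank (A - lam%:M)%R)%N) ->
  forall lam, eigenvalue A lam -> mup lam (char_poly A) = 1%N.
Proof.
move=> hA rk.
have := hermitian_normalmx hA.
move/orthomx_spectralP.
set P := spectralmx A; set d := spectral_diag A => eA.
have Pu : P \in unitmx := spectral_unit A.
have cp : char_poly A = \prod_(i < n) ('X - (d 0 i)%:P).
  rewrite eA char_poly_XAY ?mulVmx // char_poly_trig ?diag_mx_is_trig //.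
  by apply: eq_bigr => i _; rewrite mxE eqxx mulr1n.
move=> lam; rewrite eigenvalue_root_char cp => rt.
have [i di] : exists i, d 0 i = lam.
  case: (pickP (fun i => d 0 i == lam)) => [i /eqP|none]; first by exists i.
  move: rt; rewrite /root horner_prod => /prodf_eq0 [j _].
  by rewrite hornerXsubC subr_eq0 eq_sym (none j).
have others : forall j, j != i -> d 0 j != lam.
  move=> j ji; apply/negP => /eqP dj.
  pose E := diag_mx d - lam%:M.
  have eB : A - lam%:M = invmx P *m E *m P.
    rewrite /E mulmxBr mulmxBl -eA; congr (_ - _).
    by rewrite -mulmxA -scalar_mxC mulmxA mulVmx // mul1mx.
  pose h := fun x : 'I_2 => if x == ord0 then i else j.
  have hinj : injective h.
    move=> x y; rewrite /h.
    case: (x =P ord0) => [->|/eqP x0]; case: (y =P ord0) => [->|/eqP y0] //.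
    - by move=> /esym/eqP; rewrite (negbTE ji).
    - by move=> /eqP; rewrite (negbTE ji).
    - by move=> _; apply/val_inj; case: x x0 => [[|[|x]] ?] //; case: y y0 => [[|[|y]] ?].
  pose V := rowsub h (1%:M : 'M[C]_n).
  have VE : V *m E = 0.
    rewrite /V mul_rowsub_mx mul1mx; apply/matrixP => a b.
    rewrite !mxE /h; case: (a == ord0); rewrite ?di ?dj;
    by case: (_ == b); rewrite ?mulr1n ?mulr0n ?subrr ?subr0.
  have V1 : V *m mxsub id h (1%:M : 'M[C]_n) = 1%:M.
    rewrite /V mul_rowsub_mx mul1mx; apply/matrixP => a b; rewrite !mxE.
    by rewrite (inj_eq hinj).
  have rV : \rank V = 2%N.
    apply/eqP; rewrite eqn_leq rank_leq_row /=.
    apply: (@leq_trans (\rank (V *m mxsub id h (1%:M : 'M[C]_n)))); last exact: mxrankM_maxl.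
    by rewrite V1 mxrank1.
  have WB : (V *m P) *m (A - lam%:M) = 0.
    by rewrite eB !mulmxA mulmxK // VE !mul0mx.
  have : (\rank (V *m P) <= \rank (kermx (A - lam%:M)%R))%N.
    by apply: mxrankS; apply/sub_kermxP.
  rewrite mxrankMfree ?row_free_unit // rV mxrank_ker.
  have := rk lam.
  have := ltn_ord i.
  move: (\rank _) => r; lia.
rewrite (bigD1 i) //= mupMl.
  by have := mup_XsubCX 1 lam (d 0 i); rewrite expr1 di eqxx.
rewrite /root horner_prod; apply/prodf_neq0 => j ji.
by rewrite hornerXsubC subr_eq0 eq_sym others.
Qed.

Lemma rank_colsub_le (F : fieldType) m n p (g : 'I_p -> 'I_n) (B : 'M[F]_(m, n)) :
  (\rank (mxsub id g B) <= \rank B)%N.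
Proof.
rewrite -mxrank_tr -[X in (_ <= X)%N]mxrank_tr.
have -> : (mxsub id g B)^T = rowsub g B^T by apply/matrixP => i j; rewrite !mxE.
exact/mxrankS/rowsub_sub.
Qed.

Lemma tridiag_rank (F : fieldType) n (B : 'M[F]_n) :
  (forall p q : 'I_n, (p.+1 < q)%N -> B p q = 0) ->
  (forall p q : 'I_n, q = p.+1 :> nat -> B p q != 0) ->
  (n.-1 <= \rank B)%N.
Proof.
case: n B => [|n] B Bz Bnz //=.
pose f := fun i : 'I_n => widen_ord (leqnSn n) i.
pose g := fun i : 'I_n => lift ord0 i.
pose M := mxsub f g B.
have rM : \rank M = n.
  apply: mxrank_unit; rewrite unitmxE det_trig.
    rewrite unitfE; apply/prodf_neq0 => i _.
    by rewrite mxE; apply: Bnz.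
  apply/is_trig_mxP => i j ij; rewrite mxE; apply: Bz => /=.
  by rewrite /bump leq0n add1n ltnS.
rewrite -[X in (X <= _)%N]rM.
have -> : M = rowsub f (mxsub id g B) by apply/matrixP => i j; rewrite !mxE.
apply: (@leq_trans (\rank (mxsub id g B))); last exact: rank_colsub_le.
exact/mxrankS/rowsub_sub.
Qed.

Lemma char_poly_opp (F : fieldType) n (A : 'M[F]_n) :
  char_poly A \Po (- 'X) = (-1) ^+ n * char_poly (- A).
Proof.
rewrite /char_poly -det_map_mx -detZ; congr (\det _).
apply/matrixP => i j; rewrite !mxE.
case: (i == j); rewrite ?mulr1n ?mulr0n /=.
- by rewrite comp_polyB comp_polyX comp_polyC polyCN mulN1r opprB addrC.
- by rewrite !sub0r raddfN /= comp_polyC polyCN mulN1r opprK.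
Qed.

Lemma even_simple_root0 (C : numClosedFieldType) (p : {poly C}) :
  p != 0 -> p \Po (- 'X) = p -> mup 0 p = 1%N -> False.
Proof.
move=> p0 ev mu.
have X0 : ('X - (0:C)%:P) = 'X by rewrite polyC0 subr0.
have : ('X - (0:C)%:P) %| p by rewrite XsubC_dvd // mu.
rewrite X0 => /dvdpP [q pq].
have n2 : ~~ (('X - (0:C)%:P) ^+ 2 %| p) by rewrite -mup_leq // mu.
rewrite X0 in n2.
have q0 : q.[0] = 0.
  have e : 'X * (- (q \Po (- 'X))) = 'X * q.
    move: ev; rewrite pq comp_polyM comp_polyX => ev.
    by rewrite mulrN -mulNr mulrC ev mulrC.
  have Xn0 : ('X : {poly C}) != 0 by rewrite polyX_eq0.
  have e2 : - (q \Po (- 'X)) = q by apply: (mulfI Xn0); rewrite e.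
  have := congr1 (horner^~ 0) e2.
  rewrite hornerN horner_comp hornerN hornerX oppr0 => /eqP.
  rewrite eq_sym -subr_eq0 opprK -mulr2n mulrn_eq0 /=. by move/eqP.
have : 'X - (0:C)%:P %| q by rewrite dvdp_XsubCl /root q0.
rewrite X0 => /dvdpP [q' qq'].
by move: n2; rewrite pq qq' -mulrA -expr2 dvdp_mull.
Qed.

Lemma seq_avoid (R : rcfType) (s : seq R[i]) :
  all (fun z => z != 0) s ->
  exists E0 : R, 0 < E0 /\ forall x : R, `|x| < E0 -> all (fun z => x%:C != z) s.
Proof.
elim: s => [|z s IH] /=; first by move=> _; exists 1; split.
case/andP => z0 /IH [E [E0 H]].
pose e := if complex.Im z == 0 then `|complex.Re z| else 1.
have e0 : 0 < e.
  rewrite /e; case: eqP => // iz; rewrite normr_gt0.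
  apply: contra z0 => /eqP rz; apply/eqP.
  by move: iz rz; case: z {e} => a b /= -> ->.
exists (Num.min e E); split; first by rewrite lt_min e0 E0.
move=> x; rewrite lt_min => /andP [xe xE]; rewrite H // andbT.
apply/eqP => xz; move: xe; rewrite /e -xz /= eqxx ltxx //.
Qed.

Lemma poly_nonzero_near0 (R : rcfType) (p : {poly R[i]}) :
  ~~ root p 0 -> exists E0 : R, 0 < E0 /\
     forall x : R, - E0 < x < E0 -> ~~ root p x%:C.
Proof.
move=> r0.
have p0 : p != 0 by apply: contra r0 => /eqP ->; rewrite root0.
have [rs prs] := closed_field_poly_normal p.
have : all (fun z => z != 0) rs.
  apply/allP => z zin; apply: contra r0 => /eqP z0.
  rewrite prs /root hornerZ horner_prod mulf_eq0; apply/orP; right.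
  by rewrite prodf_seq_eq0; apply/hasP; exists z => //; rewrite /= z0 hornerXsubC subrr.
move=> /seq_avoid [E [E0 H]]; exists E; split => // x; rewrite -ltr_norml => xE.
rewrite prs /root hornerZ horner_prod mulf_eq0 negb_or lead_coef_eq0 p0 /=.
rewrite prodf_seq_neq0; apply/allP => z zin /=.
rewrite hornerXsubC subr_eq0.
by have /allP := H x xE; apply.
Qed.

Lemma conj_realC (R : rcfType) (x : R) : (x%:C)^*%R = x%:C :> R[i].
Proof. by apply: conj_Creal; rewrite complex_real. Qed.

Lemma Hentry_phase (R : rcfType) m (g v : R) (kap kc w : R[i]) :
  w != 0 -> kap = kc * w -> kap^*%R = kc / w -> kc^*%R = kc ->
  forall j a l b, (a < 2)%N -> (b < 2)%N ->
  Hentry m g v kap j a l b = w ^+ (j + a) * Hentry m g v kc j a l b / w ^+ (l + b).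
Proof.
move=> w0 ek ekc ekc' j a l b.
case: a => [|[|a]] // _; case: b => [|[|b]] // _; rewrite /Hentry /=;
case: (j =P l) => [<-|jl] /=; rewrite ?eqxx ?ekc ?ekc' ?ek ?addn0 ?addn1 ?exprS;
try (field; by rewrite ?expf_neq0).
all: case: (l =P j.+1) => [->|lj] /=; rewrite ?exprS; try (field; by rewrite ?expf_neq0).
all: case: (j =P l.+1) => [->|lj2] /=; rewrite ?exprS; try (field; by rewrite ?expf_neq0).
Qed.

Lemma uj_rev (R : rcfType) m (v : R) j : (j < m)%N ->
  uj m v (m.-1 - j) = - uj m v j.
Proof.
move=> jm; rewrite /uj.
have -> : (m.-1 - j).+1 = (m - j)%N by lia.
rewrite natrB; last by lia.
rewrite -(natr1 j).
by move: (v / _) => c; field.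
Qed.

Lemma Hentry_rev (R : rcfType) m (g v : R) (kc : R[i]) :
  kc^*%R = kc ->
  forall j a l b, (j < m)%N -> (l < m)%N -> (a < 2)%N -> (b < 2)%N ->
  (-1) ^+ a * Hentry m g v kc (m.-1 - j)%N (1 - a)%N (m.-1 - l)%N (1 - b)%N * (-1) ^+ b
  = - Hentry m g v kc j a l b.
Proof.
move=> ekc j a l b jm lm a2 b2.
have E1 : ((m.-1 - j)%N == (m.-1 - l)%N) = (j == l) by apply/eqP/eqP; lia.
have E2 : ((m.-1 - l)%N == (m.-1 - j)%N.+1) = (j == l.+1) by apply/eqP/eqP; lia.
have E3 : ((m.-1 - j)%N == (m.-1 - l)%N.+1) = (l == j.+1) by apply/eqP/eqP; lia.
rewrite /Hentry E1 E2 E3.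
case: (j =P l) => [ejl|jl].
  subst l; by case: a a2 => [|[|a]] // _; case: b b2 => [|[|b]] // _ /=;
     rewrite ?uj_rev // ?ekc; rewrite ?rmorphN /=; ring.
case: (l =P j.+1) => [lj1|lj]; case: (j =P l.+1) => [jl1|jl2]; try lia;
  by case: a a2 => [|[|a]] // _; case: b b2 => [|[|b]] // _ /=; ring.
Qed.

Lemma sgn2 (F : nzRingType) a : (-1) ^+ a * (-1) ^+ a = 1 :> F.
Proof. by rewrite -signr_odd; case: (odd a); rewrite ?expr1 ?expr0 ?mulrNN mulr1. Qed.

Lemma Hhat_sym (R : rcfType) m (g v : R) (kc : R[i]) : kc^*%R = kc ->
  exists X Y : 'M[R[i]]_(2 * m),
    X *m Y = 1%:M /\ X *m Hhat m g v kc *m Y = - Hhat m g v kc.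
Proof.
move=> ekc.
pose s (p : 'I_(2 * m)) : R[i] := (-1) ^+ (p %% 2).
pose X := \matrix_(p, r) (if r == rev_ord p then s p else 0) : 'M[R[i]]_(2 * m).
pose Y := \matrix_(t, q) (if t == rev_ord q then s q else 0) : 'M[R[i]]_(2 * m).
have XB : forall B : 'M[R[i]]_(2 * m), X *m B = \matrix_(p, q) (s p * B (rev_ord p) q).
  move=> B; apply/matrixP => p q; rewrite !mxE (bigD1 (rev_ord p)) //= big1 ?addr0.
    by rewrite mxE eqxx.
  by move=> r /negbTE rp; rewrite mxE rp mul0r.
have BY : forall B : 'M[R[i]]_(2 * m), B *m Y = \matrix_(p, q) (B p (rev_ord q) * s q).
  move=> B; apply/matrixP => p q; rewrite !mxE (bigD1 (rev_ord q)) //= big1 ?addr0.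
    by rewrite mxE eqxx.
  by move=> r /negbTE rp; rewrite mxE rp mulr0.
exists X, Y; split.
  apply/matrixP => p q; rewrite XB !mxE (inj_eq rev_ord_inj).
  case: (p =P q) => [<-|pq] /=; last by rewrite mulr0.
  by rewrite sgn2.
rewrite -mulmxA XB BY; apply/matrixP => p q; rewrite !mxE mulrA.
have pm : (p %/ 2 < m)%N by have := ltn_ord p; lia.
have qm : (q %/ 2 < m)%N by have := ltn_ord q; lia.
have r1 : ((rev_ord p) %/ 2 = m.-1 - p %/ 2)%N by rewrite /=; have := ltn_ord p; lia.
have r2 : ((rev_ord p) %% 2 = 1 - p %% 2)%N by rewrite /=; have := ltn_ord p; lia.
have r3 : ((rev_ord q) %/ 2 = m.-1 - q %/ 2)%N by rewrite /=; have := ltn_ord q; lia.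
have r4 : ((rev_ord q) %% 2 = 1 - q %% 2)%N by rewrite /=; have := ltn_ord q; lia.
rewrite r1 r2 r3 r4 /s Hentry_rev //; by rewrite ltn_pmod.
Qed.

Lemma Hhat_phase (R : rcfType) m (g v : R) (kap kc w : R[i]) :
  w != 0 -> kap = kc * w -> kap^*%R = kc / w -> kc^*%R = kc ->
  exists X Y : 'M[R[i]]_(2 * m),
    X *m Y = 1%:M /\ Hhat m g v kap = X *m Hhat m g v kc *m Y.
Proof.
move=> w0 e1 e2 e3.
pose c (p : 'I_(2 * m)) : R[i] := w ^+ (p %/ 2 + p %% 2).
have c0 : forall p, c p != 0 by move=> p; rewrite expf_neq0.
exists (diag_mx (\row_p c p)), (diag_mx (\row_p (c p)^-1)); split.
  apply/matrixP => p q; rewrite mul_diag_mx !mxE.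
  case: (p =P q) => [epq|pq] /=; last by rewrite mulr0.
  by subst q; rewrite mulr1n divff.
apply/matrixP => p q; rewrite mul_mx_diag mul_diag_mx !mxE.
by rewrite (@Hentry_phase R m g v kap kc w w0 e1 e2 e3) ?ltn_pmod // /c mulrA.
Qed.

Lemma Hentry_herm (R : rcfType) m (g v : R) (kc : R[i]) : kc^*%R = kc ->
  forall j a l b, (a < 2)%N -> (b < 2)%N ->
  Hentry m g v kc j a l b = (Hentry m g v kc l b j a)^*%R.
Proof.
move=> ekc j a l b a2 b2; rewrite /Hentry.
case: (j =P l) => [ejl|jl].
  subst l; rewrite eqxx.
  by case: a a2 => [|[|a]] // _; case: b b2 => [|[|b]] // _ /=;
     rewrite ?conj_realC ?ekc.
rewrite (_ : (l == j) = false); last by apply/eqP => e; apply: jl.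
case: (l =P j.+1) => [lj1|lj]; case: (j =P l.+1) => [jl1|jl2]; try lia;
  by case: a a2 => [|[|a]] // _; case: b b2 => [|[|b]] // _ /=;
     rewrite ?conj_realC ?rmorph0.
Qed.

Lemma Hentry_far (R : rcfType) m (g v : R) (kc : R[i]) (p q : nat) :
  (p.+1 < q)%N -> Hentry m g v kc (p %/ 2)%N (p %% 2)%N (q %/ 2)%N (q %% 2)%N = 0.
Proof.
move=> pq; rewrite /Hentry.
case: ((p %/ 2)%N =P (q %/ 2)%N) => [e|_]; first lia.
case: ((q %/ 2)%N =P (p %/ 2)%N.+1) => [e|_].
  case: ((p %% 2)%N =P 1%N) => [e1|] /=; last by [].
  case: ((q %% 2)%N =P 0%N) => [e2|] //=; lia.
case: ((p %/ 2)%N =P (q %/ 2)%N.+1) => [e|_] //; lia.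
Qed.

Lemma Hentry_next (R : rcfType) m (g v : R) (kc : R[i]) (p q : nat) :
  q = p.+1 -> kc^*%R != 0 -> g != 0 ->
  Hentry m g v kc (p %/ 2)%N (p %% 2)%N (q %/ 2)%N (q %% 2)%N != 0.
Proof.
move=> pq kc0 g0; rewrite /Hentry.
case: ((p %% 2)%N =P 0%N) => [e0|e1].
  have -> : ((p %/ 2)%N == (q %/ 2)%N) by apply/eqP; lia.
  have -> : ((p %% 2)%N == (q %% 2)%N) = false by apply/eqP; lia.
  have -> : ((q %% 2)%N == 1%N) by apply/eqP; lia.
  by [].
have -> : ((p %/ 2)%N == (q %/ 2)%N) = false by apply/eqP; lia.
have -> : ((q %/ 2)%N == (p %/ 2)%N.+1) by apply/eqP; lia.
have -> : ((p %% 2)%N == 1%N) by apply/eqP; lia.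
have -> : ((q %% 2)%N == 0%N) by apply/eqP; lia.
by rewrite /= fmorph_eq0.
Qed.

Lemma Hhat_herm (R : rcfType) m (g v : R) (kc : R[i]) : kc^*%R = kc ->
  Hhat m g v kc \is hermsymmx.
Proof.
move=> ekc; apply/is_hermitianmxP; rewrite expr0 scale1r.
by apply/matrixP => p q; rewrite !mxE; apply: Hentry_herm; rewrite ?ltn_pmod.
Qed.

Lemma Hhat_rank (R : rcfType) m (g v : R) (kc : R[i]) :
  kc^*%R != 0 -> g != 0 -> forall lam,
  ((2 * m).-1 <= \rank (Hhat m g v kc - lam%:M)%R)%N.
Proof.
move=> kc0 g0 lam; apply: tridiag_rank => p q pq; rewrite !mxE.
  have -> : (p == q) = false by apply/eqP => e; move: pq; rewrite e; lia.
  by rewrite mulr0n subr0 Hentry_far.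
have -> : (p == q) = false by apply/eqP => e; move: pq; rewrite e; lia.
by rewrite mulr0n subr0 Hentry_next.
Qed.

Lemma per_v (R : rcfType) m (g v k : R) : (0 < m)%N -> 0 < g -> 0 < k ->
  (forall lam, eigenvalue (Hhat m g v k%:C) lam ->
     mup lam (char_poly (Hhat m g v k%:C)) = 1%N) /\
  exists E : R, 0 < E /\ forall x : R, - E < x < E ->
     ~~ root (char_poly (Hhat m g v k%:C)) x%:C.
Proof.
move=> m0 g0 k0.
have ekc := @conj_realC R k.
have simple : forall lam, eigenvalue (Hhat m g v k%:C) lam ->
     mup lam (char_poly (Hhat m g v k%:C)) = 1%N.
  apply: herm_simple; first exact: Hhat_herm.
  apply: Hhat_rank; last by rewrite gt_eqF.
  by rewrite ekc fmorph_eq0 gt_eqF.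
split => //.
apply: poly_nonzero_near0; apply/negP => r0.
have := simple 0; rewrite eigenvalue_root_char => /(_ r0) mu.
apply: (@even_simple_root0 _ (char_poly (Hhat m g v k%:C)) _ _ mu).
  exact/monic_neq0/char_poly_monic.
rewrite char_poly_opp.
have [X [Y [XY eH]]] := @Hhat_sym R m g v _ ekc.
rewrite -eH char_poly_XAY // exprM sqrrN expr1n expr1n mul1r //.
Qed.

Lemma finish (R : rcfType) m (g v k E : R) (kap : R[i]) : 0 < k ->
  (forall lam, eigenvalue (Hhat m g v k%:C) lam ->
     mup lam (char_poly (Hhat m g v k%:C)) = 1%N) ->
  (forall x : R, - E < x < E -> ~~ root (char_poly (Hhat m g v k%:C)) x%:C) ->
  `|kap| = k%:C ->
  (forall x : R, - E < x < E -> ~~ eigenvalue (Hhat m g v kap) x%:C) /\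
  (forall lam, eigenvalue (Hhat m g v kap) lam ->
     simple_eigenvalue (Hhat m g v kap) lam).
Proof.
move=> k0 sv Ev nk.
have kc0 : k%:C != 0 :> R[i] by rewrite fmorph_eq0 gt_eqF.
have kap0 : kap != 0.
  apply/eqP => e; move: nk; rewrite e normr0 => /eqP; rewrite eq_sym.
  by rewrite (negbTE kc0).
pose w := kap / k%:C.
have w0 : w != 0 by rewrite mulf_neq0 ?invr_eq0.
have e1 : kap = k%:C * w by rewrite /w mulrC divfK.
have e2 : kap^*%R = k%:C / w.
  have h2 : kap * kap^*%R = k%:C ^+ 2 by rewrite -normCK nk.
  apply: (mulfI kap0); rewrite h2 /w; field.
  by rewrite kap0 kc0.
have e3 := @conj_realC R k.
have [X [Y [XY eH]]] := @Hhat_phase R m g v kap k%:C w w0 e1 e2 e3.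
have cp : char_poly (Hhat m g v kap) = char_poly (Hhat m g v k%:C).
  by rewrite eH char_poly_XAY.
split.
  by move=> x xE; rewrite eigenvalue_root_char cp; apply: Ev.
move=> lam; rewrite /simple_eigenvalue !eigenvalue_root_char cp => rl.
by apply: sv; rewrite eigenvalue_root_char.
Qed.

Theorem theorem2p2 (R : rcfType) (m : nat) (gamma u k : R) :
  (2 <= m)%N -> 0 < gamma -> 0 < u -> 0 < k ->
  exists E0 : R, 0 < E0 /\
    forall (h : NS) (kappa : R[i]), `|kappa| = k%:C ->
      (forall x : R, - E0 < x < E0 ->
          ~~ eigenvalue (Hh h m gamma u kappa) x%:C) /\
      (forall lam : R[i], eigenvalue (Hh h m gamma u kappa) lam ->
          simple_eigenvalue (Hh h m gamma u kappa) lam).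
Proof.
move=> m2 g0 u0 k0.
have m0 : (0 < m)%N by lia.
have [sN [EN [EN0 HN']]] := @per_v R m gamma u k m0 g0 k0.
have [sS [ES [ES0 HS']]] := @per_v R m gamma (- u) k m0 g0 k0.
exists (Num.min EN ES); split; first by rewrite lt_min EN0 ES0.
have mE1 : Num.min EN ES <= EN by rewrite ge_min lexx.
have mE2 : Num.min EN ES <= ES by rewrite ge_min lexx orbT.
move: (Num.min EN ES) mE1 mE2 => M mE1 mE2.
move=> h kap nk; case: h; rewrite /Hh /HN /HS.
  apply: (@finish R m gamma u k M kap k0 sN _ nk) => x /andP [a b]; apply: HN'; apply/andP; split.
    by apply: le_lt_trans a; rewrite lerN2.
  exact: lt_le_trans b mE1.
apply: (@finish R m gamma (- u) k M kap k0 sS _ nk) => x /andP [a b]; apply: HS'; apply/andP; split.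
  by apply: le_lt_trans a; rewrite lerN2.
exact: lt_le_trans b mE2.
Qed.
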